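(* Let $(G,M,\Delta)$ be a Garside structure, $(H,N,\delta)$ a parabolic substructure with $H\ne\{1\}$, and $T$ the set of $(H,N)$-reduced elements of $G$. Let $\mathcal S=\mathrm{Div}(\Delta)\setminus\{1\}$ and let $\lg$ denote word length in $G$ with respect to $\mathcal S$. For a right coset $C$ of $H$ in $G$ put $\lg(C)=\min\{\lg(\beta):\beta\in C\}$. Then $\lg(\theta)=\lg(H\theta)$ for every $\theta\in T$.
   Context: Let $G$ be a group and $M$ a submonoid with $M\cap M^{-1}=\{1\}$. Define partial orders on $G$ by $\alpha\le_L\beta$ iff $\alpha^{-1}\beta\in M$, and $\alpha\le_R\beta$ iff $\beta\alpha^{-1}\in M$. For $a\in M$ let $\mathrm{Div}_L(a)=\{b\in M: b\le_L a\}$, $\mathrm{Div}_R(a)=\{b\in M: b\le_R a\}$; $a$ is balanced if these coincide, and then $\mathrm{Div}(a)$ denotes this set. $M$ is Noetherian if each $a\in M$ admits an integer $n$ such that $a$ is not a product of more than $n$ non-trivial factors. A Garside structure $(G,M,\Delta)$ consists of such $G,M$ and a balanced $\Delta\in M$ such that: $M$ is Noetherian; $\mathrm{Div}(\Delta)$ is finite and generates $M$ as a monoid and $G$ as a group; $(G,\le_L)$ is a lattice (with meet $\wedge_L$). A parabolic substructure is a triple $(H,N,\delta)$ where $\delta\in M$ is balanced, $H$ (resp. $N$) is the subgroup of $G$ (resp. submonoid of $M$) generated by $\mathrm{Div}(\delta)$, and $\mathrm{Div}(\delta)=\mathrm{Div}(\Delta)\cap N$. Put $\omega=\delta^{-1}\Delta\in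 M$. An element $a\in M$ is unmovable if $\Delta\not\le_L a$. Every $\alpha\in G$ has a unique right $\Delta$-form $\alpha=a\Delta^p$ with $a\in M$ unmovable and $p\in\mathbb Z$. An element $a\in M$ is $N$-reduced if $a\wedge_L\delta=1$. An element $\alpha\in G$ with right $\Delta$-form $a\Delta^p$ is $(H,N)$-reduced if $a$ is $N$-reduced and either $p=0$, or $p<0$ and $\omega\not\le_L a$. *)

(* Defs.v *)
From Stdlib Require Import ZArith List.
Import ListNotations.

Record Grp := {
  gcar :> Type;
  gmul : gcar -> gcar -> gcar;
  ginv : gcar -> gcar;
  gone : gcar;
  gmulA : forall x y z, gmul x (gmul y z) = gmul (gmul x y) z;
  gmul1x : forall x, gmul gone x = x;
  gmulx1 : forall x, gmul x gone = x;
  gmulVx : forall x, gmul (ginv x) x = gone;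
  gmulxV : forall x, gmul x (ginv x) = gone
}.

Arguments gmul {g}.
Arguments ginv {g}.
Arguments gone {g}.

Section Garside.
Variable G : Grp.
Local Notation "x * y" := (gmul x y).
Local Notation "x ^-1" := (ginv x) (at level 3, format "x ^-1").
Local Notation "1" := (@gone G).

Fixpoint gprod (l : list G) : G :=
  match l with [] => 1 | x :: l' => x * gprod l' end.

Fixpoint gpow (x : G) (n : nat) : G :=
  match n with O => 1 | S n' => x * gpow x n' end.
Definition zpow (x : G) (z : Z) : G :=
  match z with
  | Z0 => 1
  | Zpos p => gpow x (Pos.to_nat p)
  | Zneg p => gpow (x^-1) (Pos.to_nat p)
  end.

Definition submonoid (M : G -> Prop) : Prop :=
  M 1 /\ (forall x y, M x -> M y -> M (x * y)).
Definition pointed (M : G -> Prop) : Prop :=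
  forall x, M x -> M (x^-1) -> x = 1.

Definition leL (M : G -> Prop) (a b : G) : Prop := M (a^-1 * b).
Definition leR (M : G -> Prop) (a b : G) : Prop := M (b * a^-1).

Definition DivL (M : G -> Prop) (a : G) (b : G) : Prop := M b /\ leL M b a.
Definition DivR (M : G -> Prop) (a : G) (b : G) : Prop := M b /\ leR M b a.

(** a is balanced: Div_L(a) = Div_R(a) (as sets); Div(a) is then Div_L(a). *)
Definition balanced (M : G -> Prop) (a : G) : Prop :=
  M a /\ forall b, DivL M a b <-> DivR M a b.
Definition Div (M : G -> Prop) (a : G) : G -> Prop := DivL M a.

Definition noetherian (M : G -> Prop) : Prop :=
  forall a, M a -> exists n : nat, forall l : list G,
    (forall x, In x l -> M x /\ x <> 1) -> gprod l = a -> length l <= n.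

Definition gen_monoid (S : G -> Prop) (b : G) : Prop :=
  exists l : list G, (forall x, In x l -> S x) /\ gprod l = b.
Definition letter (e : bool * G) : G := if fst e then snd e else (snd e)^-1.
Definition eval_word (w : list (bool * G)) : G := gprod (map letter w).
Definition gen_group (S : G -> Prop) (g : G) : Prop :=
  exists w : list (bool * G), (forall e, In e w -> S (snd e)) /\ eval_word w = g.

Definition finite_set (S : G -> Prop) : Prop :=
  exists l : list G, forall x, S x <-> In x l.

Definition is_meetL (M : G -> Prop) (c a b : G) : Prop :=
  leL M c a /\ leL M c b /\ (forall d, leL M d a -> leL M d b -> leL M d c).
Definition is_joinL (M : G -> Prop) (c a b : G) : Prop :=
  leL M a c /\ leL M b c /\ (forall d, leL M a d -> leL M b d -> leL M c d).
Definition latticeL (M : G -> Prop) : Prop :=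
  forall a b, (exists c, is_meetL M c a b) /\ (exists c, is_joinL M c a b).

Definition garside (M : G -> Prop) (D : G) : Prop :=
  submonoid M /\ pointed M /\ balanced M D /\
  noetherian M /\
  finite_set (Div M D) /\
  (forall b, M b <-> gen_monoid (Div M D) b) /\
  (forall g, gen_group (Div M D) g) /\
  latticeL M.

Definition parH (M : G -> Prop) (d : G) : G -> Prop := gen_group (Div M d).
Definition parN (M : G -> Prop) (d : G) : G -> Prop := gen_monoid (Div M d).
Definition parabolic (M : G -> Prop) (D d : G) : Prop :=
  balanced M d /\
  forall b, Div M d b <-> (Div M D b /\ parN M d b).

Definition unmovable (M : G -> Prop) (D a : G) : Prop := M a /\ ~ leL M D a.
Definition right_Dform (M : G -> Prop) (D alpha a : G) (p : Z) : Prop :=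
  unmovable M D a /\ alpha = a * zpow D p.
Definition N_reduced (M : G -> Prop) (d a : G) : Prop :=
  M a /\ is_meetL M 1 a d.
Definition omega (D d : G) : G := d^-1 * D.
Definition HN_reduced (M : G -> Prop) (D d alpha : G) : Prop :=
  exists (a : G) (p : Z), right_Dform M D alpha a p /\ N_reduced M d a /\
    (p = 0%Z \/ (p < 0 /\ ~ leL M (omega D d) a)%Z).

(** Word length with respect to S = Div(Δ) \ {1} (words in S ∪ S^{-1}). *)
Definition Sgen (M : G -> Prop) (D : G) (x : G) : Prop := Div M D x /\ x <> 1.
Definition represents (M : G -> Prop) (D : G) (w : list (bool * G)) (b : G) :=
  (forall e, In e w -> Sgen M D (snd e)) /\ eval_word w = b.
Definition wordlen (M : G -> Prop) (D b : G) (n : nat) : Prop :=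
  (exists w, represents M D w b /\ length w = n) /\
  (forall w, represents M D w b -> n <= length w).
Definition in_rcoset (Hs : G -> Prop) (theta b : G) : Prop :=
  exists h, Hs h /\ b = h * theta.
Definition coset_len (M : G -> Prop) (D : G) (Hs : G -> Prop) (theta : G) (n : nat) : Prop :=
  (exists b, in_rcoset Hs theta b /\ wordlen M D b n) /\
  (forall b m, in_rcoset Hs theta b -> wordlen M D b m -> n <= m).

End Garside.

(* Main.v *)
Require Import Defs.
From Stdlib Require Import ZArith List Lia Classical ClassicalEpsilon.
Import ListNotations.

Section Basics.
Variable G : Grp.
Local Notation "x * y" := (@gmul G x y).
Local Notation "x ^-1" := (@ginv G x) (at level 3, format "x ^-1").
Local Notation one := (@gone G).

Lemma inv_uniq (x y : G) : x * y = one -> y = x^-1.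
Proof.
  intro H. rewrite <- (gmul1x G y). rewrite <- (gmulVx G x).
  rewrite <- gmulA. rewrite H. apply gmulx1.
Qed.
Lemma inv_mul (x y : G) : (x * y)^-1 = y^-1 * x^-1.
Proof.
  symmetry. apply inv_uniq. rewrite <- gmulA. rewrite (gmulA G y).
  rewrite gmulxV, gmul1x. apply gmulxV.
Qed.
Lemma inv_inv (x : G) : (x^-1)^-1 = x.
Proof. symmetry. apply inv_uniq. apply gmulVx. Qed.
Lemma inv_one : one^-1 = one.
Proof. symmetry. apply inv_uniq. apply gmul1x. Qed.
Lemma mulKV (x y : G) : x * (x^-1 * y) = y.
Proof. rewrite gmulA, gmulxV. apply gmul1x. Qed.
Lemma mulVK (x y : G) : x^-1 * (x * y) = y.
Proof. rewrite gmulA, gmulVx. apply gmul1x. Qed.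
End Basics.

Lemma gmulA' (G : Grp) (x y z : G) : gmul (gmul x y) z = gmul x (gmul y z).
Proof. symmetry; apply gmulA. Qed.

Hint Rewrite gmulA' gmul1x gmulx1 gmulVx gmulxV inv_mul inv_inv inv_one mulKV mulVK : gs.
Ltac gs := autorewrite with gs.
Ltac geq := autorewrite with gs; reflexivity.

Section Main.
Variable G : Grp.
Local Notation "x * y" := (@gmul G x y).
Local Notation "x ^-1" := (@ginv G x) (at level 3, format "x ^-1").
Local Notation one := (@gone G).
Variable M : G -> Prop.
Variables D d : G.
Hypothesis HM1 : M one.
Hypothesis HMmul : forall x y, M x -> M y -> M (x * y).
Hypothesis Hpt : pointed G M.
Hypothesis HbalD : balanced G M D.
Hypothesis HgenM : forall b, M b <-> gen_monoid G (Div G M D) b.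
Hypothesis Hlat : latticeL G M.
Hypothesis Hbald : balanced G M d.
Hypothesis Hpar : forall b, Div G M d b <-> (Div G M D b /\ parN G M d b).

Local Notation le := (leL G M).

Lemma le_refl x : le x x.
Proof. unfold leL. rewrite gmulVx. exact HM1. Qed.
Lemma le_trans x y z : le x y -> le y z -> le x z.
Proof. unfold leL; intros H1 H2. replace (x^-1 * z) with ((x^-1 * y) * (y^-1 * z)) by geq. auto. Qed.
Lemma le_antisym x y : le x y -> le y x -> x = y.
Proof.
  unfold leL; intros H1 H2.
  assert (E: x^-1 * y = one). { apply Hpt; auto. replace ((x^-1 * y)^-1) with (y^-1 * x) by geq. auto. }
  rewrite <- (mulKV G x y), E, gmulx1. reflexivity.
Qed.
Lemma le_mul g x y : le (g * x) (g * y) <-> le x y.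
Proof. unfold leL. replace ((g * x)^-1 * (g * y)) with (x^-1 * y) by geq. tauto. Qed.
Lemma le_mulI g x y : le x y -> le (g * x) (g * y).
Proof. apply le_mul. Qed.
Lemma le_mulE g x y : le (g * x) (g * y) -> le x y.
Proof. apply le_mul. Qed.
Lemma M_le x : M x <-> le one x.
Proof. unfold leL. rewrite inv_one, gmul1x. tauto. Qed.
Lemma le_1 x : le x one <-> M (x^-1).
Proof. unfold leL. rewrite gmulx1. tauto. Qed.
Lemma M_le1 x : M x -> le one x. Proof. apply M_le. Qed.
Lemma le1_M x : le one x -> M x. Proof. apply M_le. Qed.
Lemma le_1I x : M (x^-1) -> le x one. Proof. apply le_1. Qed.
Lemma le_1E x : le x one -> M (x^-1). Proof. apply le_1. Qed.
Lemma le_mulM x m : M m -> le x (x * m).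
Proof. unfold leL. intros. gs. auto. Qed.

Definition jn (a b : G) : G := proj1_sig (constructive_indefinite_description _ (proj2 (Hlat a b))).
Definition mt (a b : G) : G := proj1_sig (constructive_indefinite_description _ (proj1 (Hlat a b))).
Lemma jn_spec a b : is_joinL G M (jn a b) a b.
Proof. unfold jn. destruct (constructive_indefinite_description _ _); auto. Qed.
Lemma mt_spec a b : is_meetL G M (mt a b) a b.
Proof. unfold mt. destruct (constructive_indefinite_description _ _); auto. Qed.
Lemma jn_l a b : le a (jn a b). Proof. apply jn_spec. Qed.
Lemma jn_r a b : le b (jn a b). Proof. apply jn_spec. Qed.
Lemma jn_lub a b c : le a c -> le b c -> le (jn a b) c. Proof. apply jn_spec. Qed.
Lemma mt_l a b : le (mt a b) a. Proof. apply mt_spec. Qed.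
Lemma mt_r a b : le (mt a b) b. Proof. apply mt_spec. Qed.
Lemma mt_glb a b c : le c a -> le c b -> le c (mt a b). Proof. apply mt_spec. Qed.

Lemma jn_transl g a b : g * jn a b = jn (g * a) (g * b).
Proof.
  apply le_antisym.
  - rewrite <- (mulKV G g (jn (g*a) (g*b))). apply le_mulI. apply jn_lub; apply (le_mulE g); rewrite mulKV. apply jn_l. apply jn_r.
  - apply jn_lub; apply le_mulI. apply jn_l. apply jn_r.
Qed.
Lemma mt_transl g a b : g * mt a b = mt (g * a) (g * b).
Proof.
  apply le_antisym.
  - apply mt_glb; apply le_mulI. apply mt_l. apply mt_r.
  - rewrite <- (mulKV G g (mt (g*a) (g*b))). apply le_mulI. apply mt_glb; apply (le_mulE g); rewrite mulKV. apply mt_l. apply mt_r.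
Qed.
Lemma jn_comm a b : jn a b = jn b a.
Proof. apply le_antisym; apply jn_lub; (apply jn_l || apply jn_r). Qed.
Lemma jn_eq_r a b : le a b -> jn a b = b.
Proof. intro H. apply le_antisym. apply jn_lub; auto using le_refl. apply jn_r. Qed.
Lemma jn_eq_l a b : le b a -> jn a b = a.
Proof. intro H. rewrite jn_comm. apply jn_eq_r; auto. Qed.


Lemma bal_compl_l x s : balanced G M x -> Div G M x s -> Div G M x (s^-1 * x).
Proof.
  intros [Hx Hb] Hs. destruct Hs as [Hs1 Hs2]. unfold leL in Hs2.
  apply Hb. split; auto. unfold leR. replace (x * (s^-1 * x)^-1) with s by geq. auto.
Qed.
Lemma bal_compl_r x s : balanced G M x -> Div G M x s -> Div G M x (x * s^-1).
Proof.
  intros [Hx Hb] Hs. apply Hb in Hs. destruct Hs as [Hs1 Hs2]. unfold leR in Hs2.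
  split; auto. unfold leL. replace ((x * s^-1)^-1 * x) with s by geq. auto.
Qed.
Lemma bal_conj1 x s : balanced G M x -> Div G M x s -> Div G M x (x * s * x^-1).
Proof.
  intros Hb Hs. replace (x * s * x^-1) with (x * (x * s^-1)^-1) by geq.
  apply bal_compl_r; auto. apply bal_compl_r; auto.
Qed.
Lemma bal_conj2 x s : balanced G M x -> Div G M x s -> Div G M x (x^-1 * s * x).
Proof.
  intros Hb Hs. replace (x^-1 * s * x) with ((s^-1 * x)^-1 * x) by geq.
  apply bal_compl_l; auto. apply bal_compl_l; auto.
Qed.
Lemma bal_self x : balanced G M x -> Div G M x x.
Proof. intros [Hx _]. split; auto. unfold leL. rewrite gmulVx. auto. Qed.
Lemma Div_M x s : Div G M x s -> M s.
Proof. intros [H _]; auto. Qed.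

Lemma gprod_app (l1 l2 : list G) : gprod G (l1 ++ l2) = gprod G l1 * gprod G l2.
Proof. induction l1; simpl. geq. rewrite IHl1. geq. Qed.

Lemma gen_app S x y : gen_monoid G S x -> gen_monoid G S y -> gen_monoid G S (x * y).
Proof.
  intros [l1 [H1 E1]] [l2 [H2 E2]]. exists (l1 ++ l2). split.
  intros z Hz. apply in_app_or in Hz. destruct Hz; auto. rewrite gprod_app. congruence.
Qed.
Lemma gen_one S : gen_monoid G S one.
Proof. exists nil. split. intros z []. reflexivity. Qed.
Lemma gen_in S x : S x -> gen_monoid G S x.
Proof. intros. exists [x]. split. intros z [<-|[]]; auto. simpl. geq. Qed.

Lemma conj_gen x (S : G -> Prop) (HS : forall s, S s -> S (x * s * x^-1)) b :
  gen_monoid G S b -> gen_monoid G S (x * b * x^-1).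
Proof.
  intros [l [Hl E]]. subst b. induction l; simpl.
  - replace (x * one * x^-1) with one by geq. apply gen_one.
  - replace (x * (a * gprod G l) * x^-1) with ((x * a * x^-1) * (x * gprod G l * x^-1)) by geq.
    apply gen_app. apply gen_in. apply HS. apply Hl. left; auto.
    apply IHl. intros; apply Hl; right; auto.
Qed.

Lemma HMD : M D. Proof. destruct HbalD; auto. Qed.
Lemma tau_M m : M m -> M (D * m * D^-1).
Proof.
  intro H. apply HgenM. apply HgenM in H. apply conj_gen; auto.
  intros; apply bal_conj1; auto.
Qed.
Lemma taui_M m : M m -> M (D^-1 * m * D).
Proof.
  intro H. apply HgenM. apply HgenM in H.
  replace (D^-1 * m * D) with (D^-1 * m * (D^-1)^-1) by geq.
  apply conj_gen; auto.
  intros s Hs. replace (D^-1 * s * D^-1^-1) with (D^-1 * s * D) by geq. apply bal_conj2; auto.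
Qed.

Lemma gpow_S_r x n : gpow G x (S n) = gpow G x n * x.
Proof. induction n; simpl. geq. simpl in IHn. rewrite IHn at 1. geq. Qed.
Lemma gpow_add x m n : gpow G x (m + n) = gpow G x m * gpow G x n.
Proof. induction m; simpl. geq. rewrite IHm. geq. Qed.
Lemma gpow_inv x n : gpow G (x^-1) n = (gpow G x n)^-1.
Proof. induction n. simpl. geq. rewrite gpow_S_r. simpl. rewrite IHn. geq. Qed.

Definition zp (z : Z) : G := gpow G D (Z.to_nat z) * (gpow G D (Z.to_nat (- z)))^-1.

Lemma zp_nat (n : nat) : zp (Z.of_nat n) = gpow G D n.
Proof. unfold zp. rewrite Nat2Z.id. replace (Z.to_nat (- Z.of_nat n)) with 0%nat by lia. simpl. geq. Qed.
Lemma zp_negnat (n : nat) : zp (- Z.of_nat n) = (gpow G D n)^-1.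
Proof. unfold zp. rewrite Z.opp_involutive, Nat2Z.id. replace (Z.to_nat (- Z.of_nat n)) with 0%nat by lia. simpl. geq. Qed.
Lemma zp_cases z : (exists n, z = Z.of_nat n /\ zp z = gpow G D n) \/ (exists n, z = (- Z.of_nat n)%Z /\ zp z = (gpow G D n)^-1).
Proof.
  destruct (Z_le_gt_dec 0 z).
  - left. exists (Z.to_nat z). split. lia. rewrite <- zp_nat. f_equal. lia.
  - right. exists (Z.to_nat (- z)). split. lia. rewrite <- zp_negnat. f_equal. lia.
Qed.
Lemma zp_succ z : zp (z + 1) = zp z * D.
Proof.
  destruct (Z_le_gt_dec 0 z).
  - replace z with (Z.of_nat (Z.to_nat z)) by lia.
    replace (Z.of_nat (Z.to_nat z) + 1)%Z with (Z.of_nat (S (Z.to_nat z))) by lia.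
    rewrite !zp_nat. apply gpow_S_r.
  - remember (Z.to_nat (- z - 1)) as n.
    replace z with (- Z.of_nat (S n))%Z by lia.
    replace (- Z.of_nat (S n) + 1)%Z with (- Z.of_nat n)%Z by lia.
    rewrite !zp_negnat. simpl. geq.
Qed.
Lemma zp_pred z : zp (z - 1) = zp z * D^-1.
Proof.
  replace (zp z) with (zp (z - 1 + 1)) by (f_equal; lia). rewrite zp_succ. geq.
Qed.
Lemma zp_0 : zp 0 = one. Proof. unfold zp. simpl. geq. Qed.
Lemma zp_1 : zp 1 = D. Proof. replace 1%Z with (0 + 1)%Z by lia. rewrite zp_succ, zp_0. geq. Qed.
Lemma zp_add i j : zp (i + j) = zp i * zp j.
Proof.
  induction j using Z.peano_ind.
  - rewrite Z.add_0_r, zp_0. geq.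
  - rewrite Z.add_succ_r, <- !Z.add_1_r, !zp_succ, IHj. geq.
  - rewrite Z.add_pred_r, <- !Z.sub_1_r, !zp_pred, IHj. geq.
Qed.
Lemma zp_opp z : zp (- z) = (zp z)^-1.
Proof. apply inv_uniq. rewrite <- zp_add. replace (z + - z)%Z with 0%Z by lia. apply zp_0. Qed.
Lemma zpow_zp z : zpow G D z = zp z.
Proof.
  destruct z; unfold zpow, zp; simpl.
  - geq.
  - geq.
  - rewrite gpow_inv. geq.
Qed.

Lemma taup1 n : forall m, M m -> M (gpow G D n * m * (gpow G D n)^-1).
Proof.
  induction n; intros m H; simpl. replace (_ : G) with m by geq; auto.
  replace (D * gpow G D n * m * (D * gpow G D n)^-1) with (D * (gpow G D n * m * (gpow G D n)^-1) * D^-1) by geq.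
  apply tau_M; auto.
Qed.
Lemma taup2 n : forall m, M m -> M ((gpow G D n)^-1 * m * gpow G D n).
Proof.
  induction n; intros m H; simpl. replace (_ : G) with m by geq; auto.
  replace ((D * gpow G D n)^-1 * m * (D * gpow G D n)) with ((gpow G D n)^-1 * (D^-1 * m * D) * gpow G D n) by geq.
  apply IHn. apply taui_M; auto.
Qed.
Lemma tauZ z m : M m -> M ((zp z)^-1 * m * zp z).
Proof.
  intro H. destruct (zp_cases z) as [[n [_ E]]|[n [_ E]]]; rewrite E.
  apply taup2; auto. replace ((gpow G D n)^-1^-1 * m * (gpow G D n)^-1) with (gpow G D n * m * (gpow G D n)^-1) by geq. apply taup1; auto.
Qed.
Lemma tauZ' z m : M m -> M (zp z * m * (zp z)^-1).
Proof.
  intro H. replace (zp z * m * (zp z)^-1) with ((zp (- z))^-1 * m * zp (- z)) by (rewrite zp_opp; geq). apply tauZ; auto.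
Qed.
Lemma le_mulr z x y : le x y <-> le (x * zp z) (y * zp z).
Proof.
  unfold leL. replace ((x * zp z)^-1 * (y * zp z)) with ((zp z)^-1 * (x^-1 * y) * zp z) by geq.
  split. apply tauZ. intro H. apply (tauZ' z) in H.
  replace (zp z * ((zp z)^-1 * (x^-1 * y) * zp z) * (zp z)^-1) with (x^-1 * y) in H by geq. auto.
Qed.
Lemma zp_mono i j : (i <= j)%Z -> le (zp i) (zp j).
Proof.
  intro H. unfold leL. rewrite <- zp_opp, <- zp_add.
  replace (- i + j)%Z with (Z.of_nat (Z.to_nat (j - i))) by lia. rewrite zp_nat.
  generalize (Z.to_nat (j - i)). induction n; simpl; auto. apply HMmul; auto. apply HMD.
Qed.
Lemma LR_zp z g : le g (zp z) <-> leR G M g (zp z).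
Proof.
  unfold leL, leR. split; intro H.
  - apply (tauZ' z) in H. replace (zp z * (g^-1 * zp z) * (zp z)^-1) with (zp z * g^-1) in H by geq. auto.
  - apply (tauZ z) in H. replace ((zp z)^-1 * (zp z * g^-1) * zp z) with (g^-1 * zp z) in H by geq. auto.
Qed.

Definition R (x y : G) : G := jn one (x^-1 * y).
Lemma R_eq x y : x * R x y = jn x y.
Proof. unfold R. rewrite jn_transl. f_equal; geq. Qed.
Lemma R_ge1 x y : M (R x y).
Proof. apply le1_M. apply jn_l. Qed.
Lemma R1 x1 x2 y : M x2 -> R (x1 * x2) y = R x2 (R x1 y).
Proof.
  intro Hx2. unfold R. rewrite (jn_transl (x2^-1)), gmulx1. apply le_antisym.
  - apply jn_lub. apply jn_l. eapply le_trans; [|apply jn_r].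
    replace ((x1 * x2)^-1 * y) with (x2^-1 * (x1^-1 * y)) by geq. apply jn_r.
  - apply jn_lub. apply jn_l. apply jn_lub.
    + eapply le_trans; [|apply jn_l]. apply le_1I. rewrite inv_inv. auto.
    + replace (x2^-1 * (x1^-1 * y)) with ((x1 * x2)^-1 * y) by geq. apply jn_r.
Qed.
Lemma R2 x y1 y2 : M y2 -> R x (y1 * y2) = R x y1 * R (R y1 x) y2.
Proof.
  intro Hy2.
  assert (E : R x y1 * (R y1 x)^-1 = x^-1 * y1).
  { assert (E1 : x * R x y1 = y1 * R y1 x) by (rewrite !R_eq; apply jn_comm).
    replace (R x y1) with (x^-1 * (y1 * R y1 x)) by (rewrite <- E1; geq). geq. }
  assert (E2 : forall u v w, u * R v w = jn u (u * (v^-1 * w))).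
  { intros. unfold R. rewrite jn_transl, gmulx1. reflexivity. }
  rewrite E2. replace (R x y1 * ((R y1 x)^-1 * y2)) with (x^-1 * y1 * y2)
    by (rewrite <- E; geq).
  apply le_antisym.
  - unfold R at 1. apply jn_lub.
    + eapply le_trans; [|apply jn_l]. unfold R. apply jn_l.
    + replace (x^-1 * (y1 * y2)) with (x^-1 * y1 * y2) by geq. apply jn_r.
  - apply jn_lub.
    + unfold R. apply jn_lub. apply jn_l. eapply le_trans; [|apply jn_r].
      replace (x^-1 * (y1 * y2)) with (x^-1 * y1 * y2) by geq. apply le_mulM; auto.
    + unfold R. replace (x^-1 * (y1 * y2)) with (x^-1 * y1 * y2) by geq. apply jn_r.
Qed.
Lemma R_1l y : M y -> R one y = y.
Proof. intro H. unfold R. rewrite inv_one, gmul1x. apply jn_eq_r. apply M_le1; auto. Qed.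
Lemma R_1r y : M y -> R y one = one.
Proof. intro H. unfold R. rewrite gmulx1. apply jn_eq_l. apply le_1I. rewrite inv_inv; auto. Qed.
Lemma R_le x y : le x y -> R x y = x^-1 * y.
Proof. intro H. unfold R. apply jn_eq_r. apply M_le1; auto. Qed.

Local Notation N := (parN G M d).
Local Notation H := (parH G M d).
Lemma Md : M d. Proof. destruct Hbald; auto. Qed.
Lemma divd_divD s : Div G M d s -> Div G M D s.
Proof. intro H0. apply Hpar in H0. tauto. Qed.
Lemma N_M x : N x -> M x.
Proof.
  intros [l [Hl E]]. subst x. induction l; simpl; auto. apply HMmul.
  apply Div_M with d. apply Hl; left; auto. apply IHl; intros; apply Hl; right; auto.
Qed.
Lemma N_mul x y : N x -> N y -> N (x * y). Proof. apply gen_app. Qed.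
Lemma N_one : N one. Proof. apply gen_one. Qed.
Lemma N_in s : Div G M d s -> N s. Proof. apply gen_in. Qed.
Lemma N_conj x : N x -> N (d * x * d^-1).
Proof. apply conj_gen. intros; apply bal_conj1; auto. Qed.

Lemma R_simple x s t : balanced G M x -> Div G M x s -> Div G M x t -> Div G M x (R s t).
Proof.
  intros Hb Hs Ht. split. apply R_ge1.
  apply le_trans with (s^-1 * x).
  - apply (le_mulE s). rewrite R_eq, mulKV. apply jn_lub. apply Hs. apply Ht.
  - apply bal_compl_l; auto.
Qed.

Definition NL (k : nat) (x : G) := exists l, (forall z, In z l -> Div G M d z) /\ (length l <= k)%nat /\ gprod G l = x.
Lemma NL_N k x : NL k x -> N x.
Proof. intros [l [H1 [_ H3]]]. exists l; auto. Qed.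
Lemma N_NL x : N x -> exists k, NL k x.
Proof. intros [l [H1 H3]]. exists (length l), l. auto. Qed.
Lemma NL_M k x : NL k x -> M x. Proof. intro; apply N_M; eapply NL_N; eauto. Qed.
Lemma NL_0 x : NL 0 x -> x = one.
Proof. intros [l [_ [H2 H3]]]. destruct l; simpl in *. auto. lia. Qed.
Lemma NL_1 s : Div G M d s -> NL 1 s.
Proof. intros. exists [s]. split. intros z [<-|[]]; auto. split. simpl; lia. simpl; geq. Qed.
Lemma NL_one k : NL k one.
Proof. exists nil. split. intros z []. split. simpl; lia. reflexivity. Qed.
Lemma NL_mul a b x y : NL a x -> NL b y -> NL (a + b) (x * y).
Proof.
  intros [l1 [H1 [L1 E1]]] [l2 [H2 [L2 E2]]]. exists (l1 ++ l2). split.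
  intros z Hz; apply in_app_or in Hz; destruct Hz; auto. split. rewrite length_app; lia.
  rewrite gprod_app; congruence.
Qed.
Lemma NL_cons k x : NL (S k) x -> x = one \/ exists s y, Div G M d s /\ NL k y /\ x = s * y.
Proof.
  intros [l [H1 [L E]]]. destruct l as [|s l]; simpl in *. left; auto.
  right. exists s, (gprod G l). split. apply H1; left; auto. split. exists l. split. intros; apply H1; right; auto. split. lia. auto. auto.
Qed.

Lemma grid1 b : forall s y, Div G M d s -> NL b y -> NL b (R s y) /\ NL 1 (R y s).
Proof.
  induction b; intros s y Hs Hy.
  - apply NL_0 in Hy. subst y. rewrite R_1r, R_1l. split. apply NL_one. apply NL_1; auto.
    apply Div_M with d; auto. apply Div_M with d; auto.
  - apply NL_cons in Hy. destruct Hy as [->|[t [y' [Ht [Hy' ->]]]]].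
    + rewrite R_1r, R_1l. split. apply NL_one. apply NL_1; auto.
      apply Div_M with d; auto. apply Div_M with d; auto.
    + assert (My' : M y') by (eapply NL_M; eauto).
      destruct (IHb (R t s) y' (R_simple _ _ _ Hbald Ht Hs) Hy') as [A1 A2]. split.
      * rewrite R2; auto. replace (S b) with (1 + b)%nat by lia. apply NL_mul; auto.
        apply NL_1. apply R_simple; auto.
      * rewrite R1; auto.
Qed.
Lemma grid2 a : forall x b y, NL a x -> NL b y -> NL b (R x y) /\ NL a (R y x).
Proof.
  induction a; intros x b y Hx Hy.
  - apply NL_0 in Hx. subst x. assert (My : M y) by (eapply NL_M; eauto).
    rewrite R_1r, R_1l; auto. split; auto. apply NL_one.
  - assert (My : M y) by (eapply NL_M; eauto).
    apply NL_cons in Hx. destruct Hx as [->|[s [x' [Hs [Hx' ->]]]]].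
    + rewrite R_1r, R_1l; auto. split; auto. apply NL_one.
    + assert (Mx' : M x') by (eapply NL_M; eauto).
      destruct (grid1 b s y Hs Hy) as [B1 B2].
      destruct (IHa x' b (R s y) Hx' B1) as [C1 C2]. split.
      * rewrite R1; auto.
      * rewrite R2; auto. replace (S a) with (1 + a)%nat by lia. apply NL_mul; auto.
Qed.
Lemma RN x y : N x -> N y -> N (R x y).
Proof.
  intros Hx Hy. destruct (N_NL x Hx) as [a Ha]. destruct (N_NL y Hy) as [b Hb].
  eapply NL_N. apply (grid2 a x b y Ha Hb).
Qed.
Lemma LQ x n : N x -> N n -> le x n -> N (x^-1 * n).
Proof. intros. rewrite <- R_le; auto. apply RN; auto. Qed.

Lemma le1_M_eq x : M x -> le x one -> x = one.
Proof. intros H1 H2. apply le_antisym; auto. apply M_le1; auto. Qed.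

Lemma P2s l : (forall z, In z l -> Div G M d z) -> forall s, Div G M D s -> le s (gprod G l) -> Div G M d s.
Proof.
  induction l as [|t l IH]; intros Hl s Hs Hle; simpl in *.
  - assert (s = one) by (apply le1_M_eq; auto; apply Hs). subst s.
    split; auto. unfold leL. rewrite inv_one, gmul1x. apply Md.
  - assert (Ht : Div G M d t) by (apply Hl; left; auto).
    assert (Mt : M t) by (apply Ht).
    assert (Ml : M (gprod G l)) by (apply N_M; exists l; split; auto; intros; apply Hl; right; auto).
    assert (HtD : Div G M D t) by (apply divd_divD; auto).
    assert (Hr : Div G M d (R t s)).
    { apply IH. intros; apply Hl; right; auto.
      - split. apply R_ge1. apply le_trans with (t^-1 * D).
        + apply (le_mulE t). rewrite R_eq, mulKV. apply jn_lub. apply HtD. apply Hs.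
        + apply bal_compl_l; auto.
      - apply (le_mulE t). rewrite R_eq. apply jn_lub. apply le_mulM; auto. auto. }
    assert (Hj : Div G M d (jn t s)).
    { apply Hpar. split.
      - split. apply le1_M. eapply le_trans; [|apply jn_l]. apply M_le1; auto.
        apply jn_lub. apply HtD. apply Hs.
      - rewrite <- R_eq. apply N_mul; apply N_in; auto. }
    split. apply Hs. eapply le_trans. apply jn_r. apply Hj.
Qed.

Lemma P2 m n : M m -> N n -> le m n -> N m.
Proof.
  intros Hm. apply HgenM in Hm. destruct Hm as [l [Hl E]]. subst m. revert n.
  induction l as [|s l IH]; intros n Hn Hle; simpl in *.
  - apply N_one.
  - assert (Hs : Div G M D s) by (apply Hl; left; auto).
    assert (Ml : M (gprod G l)) by (apply HgenM; exists l; split; auto; intros; apply Hl; right; auto).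
    destruct Hn as [ln [Hln En]].
    assert (Hsd : Div G M d s).
    { apply P2s with ln; auto. rewrite En. eapply le_trans; [|apply Hle]. apply le_mulM; auto. }
    apply N_mul. apply N_in; auto.
    apply IH with (s^-1 * n). intros; apply Hl; right; auto.
    apply LQ. apply N_in; auto. exists ln; auto. eapply le_trans; [|apply Hle]. apply le_mulM; auto.
    apply (le_mulE s). rewrite mulKV. auto.
Qed.


Lemma eval_app (w1 w2 : list (bool * G)) : eval_word G (w1 ++ w2) = eval_word G w1 * eval_word G w2.
Proof. unfold eval_word. rewrite map_app, gprod_app. reflexivity. Qed.
Definition flip (e : bool * G) : bool * G := (negb (fst e), snd e).
Lemma eval_inv w : eval_word G (rev (map flip w)) = (eval_word G w)^-1.
Proof.
  induction w as [|[b x] w IH]; simpl. unfold eval_word; simpl; geq.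
  rewrite eval_app, IH. unfold eval_word; simpl. unfold letter, flip; destruct b; simpl; geq.
Qed.
Lemma H_mul x y : H x -> H y -> H (x * y).
Proof.
  intros [w1 [H1 E1]] [w2 [H2 E2]]. exists (w1 ++ w2). split.
  intros e He; apply in_app_or in He; destruct He; auto. rewrite eval_app; congruence.
Qed.
Lemma H_inv x : H x -> H (x^-1).
Proof.
  intros [w [H1 E1]]. exists (rev (map flip w)). split.
  intros e He. rewrite <- in_rev in He. apply in_map_iff in He. destruct He as [e' [<- He']]. exact (H1 e' He').
  rewrite eval_inv; congruence.
Qed.
Lemma H_in s : Div G M d s -> H s.
Proof. intros. exists [(true, s)]. split. intros e [<-|[]]; auto. unfold eval_word; simpl; geq. Qed.
Lemma H_one : H one.
Proof. exists nil. split. intros e []. reflexivity. Qed.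
Lemma H_N x : N x -> H x.
Proof. intros [l [Hl E]]. subst x. induction l; simpl. apply H_one. apply H_mul. apply H_in; apply Hl; left; auto. apply IHl; intros; apply Hl; right; auto. Qed.
Lemma H_d : H d. Proof. apply H_in. apply bal_self; auto. Qed.

Lemma Hrep h : H h -> exists x y, N x /\ N y /\ h = x^-1 * y.
Proof.
  intros [w [Hw E]]. subst h. induction w as [|[b s] w IH].
  - exists one, one. split. apply N_one. split. apply N_one. unfold eval_word; simpl; geq.
  - destruct IH as [x [y [Hx [Hy E]]]]. intros; apply Hw; right; auto.
    assert (Hs : Div G M d s) by (apply (Hw (b, s)); left; auto).
    unfold eval_word in *; simpl. rewrite E. destruct b; simpl.
    + exists (d * (x * (s^-1 * d)) * d^-1), (d * y). split.
      apply N_conj. apply N_mul; auto. apply N_in. apply bal_compl_l; auto.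
      split. apply N_mul; auto. apply N_in; apply bal_self; auto. geq.
    + exists (x * s), y. split. apply N_mul; auto. apply N_in; auto. split; auto. geq.
Qed.
Lemma HP1 h : H h -> N (jn one h).
Proof. intro Hh. destruct (Hrep h Hh) as [x [y [Hx [Hy ->]]]]. apply RN; auto. Qed.
Lemma HM h : H h -> M h -> N h.
Proof. intros Hh Mh. rewrite <- (jn_eq_r one h). apply HP1; auto. apply M_le1; auto. Qed.
Lemma Hmeet h : H h -> H (mt one h).
Proof.
  intro Hh. destruct (Hrep h Hh) as [x [y [Hx [Hy ->]]]].
  replace (mt one (x^-1 * y)) with (x^-1 * mt x y) by (rewrite mt_transl; f_equal; geq).
  apply H_mul. apply H_inv, H_N; auto. apply H_N. apply P2 with x; auto.
  apply le1_M. apply mt_glb; apply M_le1; apply N_M; auto. apply mt_l.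
Qed.

Definition Nred (a : G) := M a /\ is_meetL G M one a d.
Lemma P3 a x : Nred a -> N x -> le x a -> x = one.
Proof.
  intros [Ma [_ [_ Hm]]] [l [Hl E]]. subst x. induction l as [|t l IH]; simpl; intros Hle. auto.
  assert (Ht : Div G M d t) by (apply Hl; left; auto).
  assert (Ml : M (gprod G l)) by (apply N_M; exists l; split; auto; intros; apply Hl; right; auto).
  assert (t = one).
  { apply le1_M_eq. apply Ht. apply Hm. eapply le_trans; [|apply Hle]. apply le_mulM; auto. apply Ht. }
  subst t. rewrite gmul1x in *. apply IH; auto. intros; apply Hl; right; auto.
Qed.
Lemma T1 a h v : Nred a -> H h -> le v a -> le v h -> le v one.
Proof.
  intros Ha Hh H1 H2.
  assert (E : jn one v = one).
  { apply (P3 a). auto. apply P2 with (jn one h). apply le1_M. apply jn_l.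
    apply HP1; auto. apply jn_lub. apply jn_l. eapply le_trans; [apply H2|apply jn_r].
    apply jn_lub. apply M_le1; apply Ha. auto. }
  rewrite <- E. apply jn_r.
Qed.
Lemma gpow_M n : M (gpow G D n).
Proof. induction n; simpl; auto. apply HMmul; auto. apply HMD. Qed.
Lemma I1 a h t : Nred a -> H h -> le (h * a) (gpow G D t) -> le a (gpow G D t).
Proof.
  intros Ha Hh Hle. rewrite <- zp_nat in *. apply LR_zp in Hle. apply LR_zp. unfold leR in *.
  set (P := zp (Z.of_nat t)) in *.
  assert (HP : M P) by (unfold P; rewrite zp_nat; apply gpow_M).
  assert (L : le (a * P^-1) one).
  { apply T1 with a (h^-1); auto. apply H_inv; auto.
    unfold leL. replace ((a * P^-1)^-1 * a) with P by geq. auto.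
    unfold leL. replace ((a * P^-1)^-1 * h^-1) with (P * (h * a)^-1) by geq. auto. }
  apply le_1E in L. replace (P * a^-1) with ((a * P^-1)^-1) by geq. auto.
Qed.

Lemma NF t : forall a, M a -> le a (gpow G D t) -> exists l, (forall z, In z l -> Div G M D z) /\ (length l <= t)%nat /\ gprod G l = a.
Proof.
  induction t; intros a Ma Hle.
  - simpl in *. exists nil. split. intros z []. split. simpl; lia. simpl. symmetry. apply le1_M_eq; auto.
  - rewrite gpow_S_r in Hle. set (a1 := mt a (gpow G D t)).
    assert (Ma1 : M a1) by (apply le1_M; apply mt_glb; apply M_le1; auto; apply gpow_M).
    assert (Hc : le a (a1 * D)).
    { assert (le (a * D^-1) a1).
      { apply mt_glb. unfold leL. replace ((a * D^-1)^-1 * a) with D by geq. apply HMD.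
        unfold leL in *. replace ((a * D^-1)^-1 * gpow G D t) with (D * (a^-1 * (gpow G D t * D)) * D^-1) by geq.
        apply tau_M. auto. }
      unfold leL in *. replace (a^-1 * (a1 * D)) with (D^-1 * ((a * D^-1)^-1 * a1) * D) by geq. apply taui_M; auto. }
    destruct (IHt a1 Ma1 (mt_r _ _)) as [l [Hl [L E]]].
    exists (l ++ [a1^-1 * a]). split.
    + intros z Hz. apply in_app_or in Hz. destruct Hz as [Hz|[<-|[]]]; auto. split. apply (mt_l a (gpow G D t)).
      unfold leL in *. replace ((a1^-1 * a)^-1 * D) with (a^-1 * (a1 * D)) by geq. auto.
    + split. rewrite length_app; simpl; lia. rewrite gprod_app, E. simpl. geq.
Qed.


Lemma dD : Div G M D d. Proof. apply divd_divD. apply bal_self; auto. Qed.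
Lemma Momp : M (D * d^-1).
Proof. destruct HbalD as [_ Hb]. pose proof dD as Y. apply Hb in Y. destruct Y as [_ X]. exact X. Qed.

Lemma Zlem k : H k -> M (D * k) -> M (d * k).
Proof.
  intros Hk MDk.
  set (n := d * k). set (m := mt one n).
  assert (Hn : H n) by (apply H_mul; auto; apply H_d).
  assert (Hm : H m) by (apply Hmeet; auto).
  assert (L1 : le ((D * d^-1)^-1) m).
  { apply mt_glb. apply le_1I. rewrite inv_inv. apply Momp.
    unfold leL. unfold n. replace ((D * d^-1)^-1^-1 * (d * k)) with (D * k) by geq. auto. }
  assert (Mmi : M (m^-1)) by (apply le_1E; apply mt_l).
  assert (Nmi : N (m^-1)) by (apply HM; auto; apply H_inv; auto).
  assert (Hx : Div G M d (m^-1 * d)).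
  { apply Hpar. split.
    - destruct HbalD as [_ Hb]. apply Hb. split. apply HMmul; auto. apply Md.
      unfold leR. unfold leL in L1. replace (D * (m^-1 * d)^-1) with ((D * d^-1)^-1^-1 * m) by geq. auto.
    - apply N_mul; auto. apply N_in. apply bal_self; auto. }
  destruct Hbald as [_ Hb]. apply Hb in Hx. destruct Hx as [_ Hx]. unfold leR in Hx.
  replace (d * (m^-1 * d)^-1) with m in Hx by geq.
  assert (E : m = one). { apply le1_M_eq; auto. apply le_1I; auto. }
  assert (le one n). { rewrite <- E. apply mt_r. }
  apply le1_M; auto.
Qed.

Definition om := d^-1 * D.
Lemma om_le_D : le om D.
Proof. unfold leL, om. replace ((d^-1 * D)^-1 * D) with (D^-1 * d * D) by geq. apply taui_M. apply Md. Qed.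

Lemma K1 s z : Div G M d s -> le s z -> le om z -> le (s * om) z.
Proof.
  intros Hs Hsz Hoz. set (u := jn s om).
  assert (Huz : le u z) by (apply jn_lub; auto).
  apply le_trans with u; auto.
  assert (HuD : le u D) by (apply jn_lub; [apply divd_divD; auto|apply om_le_D]).
  assert (Mp : M (s^-1 * u)) by (apply jn_l).
  assert (Mv : M (om^-1 * u)) by (apply jn_r).
  assert (Mw : M (u^-1 * D)) by (apply HuD).
  assert (Hw' : Div G M d (D * (u^-1 * D) * D^-1)).
  { destruct Hbald as [_ Hb]. apply Hb. split. apply tau_M; auto.
    unfold leR. replace (d * (D * (u^-1 * D) * D^-1)^-1) with (D * (om^-1 * u) * D^-1) by (unfold om; geq).
    apply tau_M; auto. }
  set (k := (s^-1 * d) * d^-1 * (D * (u^-1 * D) * D^-1)^-1).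
  assert (Hk : H k).
  { unfold k. apply H_mul. apply H_mul. apply H_in. apply bal_compl_l; auto.
    apply H_inv. apply H_d. apply H_inv. apply H_in; auto. }
  assert (MDk : M (D * k)).
  { unfold k. replace (D * (s^-1 * d * d^-1 * (D * (u^-1 * D) * D^-1)^-1)) with (D * (s^-1 * u) * D^-1) by geq.
    apply tau_M; auto. }
  apply Zlem in MDk; auto.
  unfold leL. replace ((s * om)^-1 * u) with (D^-1 * (d * k) * D) by (unfold k, om; geq).
  apply taui_M; auto.
Qed.

Lemma Klem l : (forall z, In z l -> Div G M d z) -> forall z, le (gprod G l) z -> le om z -> le (gprod G l * om) z.
Proof.
  induction l as [|s l IH]; intros Hl z H1 H2; simpl in *.
  - rewrite gmul1x; auto.
  - assert (Hs : Div G M d s) by (apply Hl; left; auto).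
    assert (Ml : M (gprod G l)) by (apply N_M; exists l; split; auto; intros; apply Hl; right; auto).
    assert (A : le (s * om) z).
    { apply K1; auto. eapply le_trans; [|apply H1]. apply le_mulM; auto. }
    rewrite gmulA'. rewrite <- (mulKV G s z). apply le_mulI. apply IH.
    intros; apply Hl; right; auto.
    apply (le_mulE s). rewrite mulKV; auto.
    apply (le_mulE s). rewrite mulKV; auto.
Qed.
Lemma Kn n z : N n -> le n z -> le om z -> le (n * om) z.
Proof. intros [l [Hl E]]. subst n. apply Klem; auto. Qed.

Lemma OmN n : N n -> le om (n * om).
Proof.
  intro Hn. unfold leL, om. replace ((d^-1 * D)^-1 * (n * (d^-1 * D))) with (D^-1 * (d * n * d^-1) * D) by geq.
  apply taui_M. apply N_M. apply N_conj; auto.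
Qed.

Lemma Qlem g : H g -> le om (jn one (g * om)).
Proof.
  intro Hg. destruct (Hrep g Hg) as [x [y [Hx [Hy ->]]]].
  replace (jn one (x^-1 * y * om)) with (x^-1 * jn x (y * om)) by (rewrite jn_transl; f_equal; geq).
  apply (le_mulE x). rewrite mulKV. set (z := jn x (y * om)).
  assert (Hyz : le (y * om) z) by apply jn_r.
  assert (Hxz : le x z) by apply jn_l.
  assert (Mom : M om) by (unfold om; apply dD).
  assert (Hyz' : le y z) by (eapply le_trans; [apply le_mulM; eauto|auto]).
  assert (A : le (jn y x * om) z).
  { rewrite <- R_eq. rewrite gmulA'. rewrite <- (mulKV G y z). apply le_mulI.
    apply Kn. apply RN; auto.
    apply (le_mulE y). rewrite R_eq, mulKV. apply jn_lub; auto.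
    apply (le_mulE y). rewrite mulKV. auto. }
  eapply le_trans; [|apply A]. rewrite jn_comm, <- R_eq, gmulA'. apply le_mulI. apply OmN. apply RN; auto.
Qed.

Lemma IIlem a h : M a -> H h -> le D (h * a) -> le om a.
Proof.
  intros Ma Hh HD.
  assert (Hg : H (h^-1 * d)) by (apply H_mul; [apply H_inv; auto|apply H_d]).
  eapply le_trans. apply (Qlem _ Hg). apply jn_lub. apply M_le1; auto.
  apply (le_mulE h). replace (h * (h^-1 * d * om)) with D by (unfold om; geq). auto.
Qed.


Lemma DivR_D x : Div G M D x -> M (D * x^-1).
Proof. intro Hx. destruct HbalD as [_ Hb]. apply Hb in Hx. apply Hx. Qed.

Lemma lip w : forall b, represents G M D w b -> exists i s, le (zp i) b /\ le b (zp s) /\ (Z.max s 0 + Z.max (- i) 0 <= Z.of_nat (length w))%Z.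
Proof.
  induction w as [|[bb x] w IH]; intros b [Hw E].
  - exists 0%Z, 0%Z. unfold eval_word in E; simpl in E. subst b. rewrite zp_0. split. apply le_refl. split. apply le_refl. simpl; lia.
  - assert (Hx : Sgen G M D x) by (apply (Hw (bb,x)); left; auto).
    destruct Hx as [Hx _].
    destruct (IH (eval_word G w)) as [i [s [A1 [A2 A3]]]].
    { split; auto. intros; apply Hw; right; auto. }
    assert (E' : b = letter G (bb, x) * eval_word G w) by (rewrite <- E; reflexivity).
    clear E. subst b. set (b' := eval_word G w) in *.
    destruct bb; unfold letter; simpl.
    + exists i, (s + 1)%Z. split; [|split].
      * apply le_trans with (x * zp i).
        unfold leL. replace ((zp i)^-1 * (x * zp i)) with ((zp i)^-1 * x * zp i) by geq. apply tauZ; apply Hx.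
        apply le_mulI; auto.
      * apply le_trans with (x * zp s). apply le_mulI; auto. rewrite Z.add_comm, zp_add, zp_1.
        unfold leL. replace ((x * zp s)^-1 * (D * zp s)) with ((zp s)^-1 * (x^-1 * D) * zp s) by geq. apply tauZ. apply Hx.
      * simpl length. lia.
    + exists (i - 1)%Z, s. split; [|split].
      * apply le_trans with (x^-1 * zp i).
        replace (zp (i - 1)) with (D^-1 * zp i) by (rewrite <- zp_1, <- zp_opp, <- zp_add; f_equal; lia).
        unfold leL. replace ((D^-1 * zp i)^-1 * (x^-1 * zp i)) with ((zp i)^-1 * (D * x^-1) * zp i) by geq.
        apply tauZ. apply DivR_D; auto.
        apply le_mulI; auto.
      * apply le_trans with (x^-1 * zp s). apply le_mulI; auto.
        unfold leL. replace ((x^-1 * zp s)^-1 * zp s) with ((zp s)^-1 * x * zp s) by geq. apply tauZ. apply Hx.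
      * simpl length; lia.
Qed.

Lemma prew pw : (forall e, In e pw -> Div G M D (snd e)) -> exists w, represents G M D w (eval_word G pw) /\ (length w <= length pw)%nat.
Proof.
  induction pw as [|e pw IH]; intros Hpw.
  - exists nil. split. split. intros e []. reflexivity. simpl; lia.
  - destruct IH as [w [[Hw E] L]]. intros; apply Hpw; right; auto.
    destruct (classic (snd e = one)) as [E1|E1].
    + exists w. split. split; auto. rewrite E. unfold eval_word; simpl. destruct e as [b x]; simpl in E1; subst x.
      unfold letter; destruct b; simpl; geq. simpl; lia.
    + exists (e :: w). split. split. intros e' [<-|He']. split; auto. apply Hpw; left; auto. apply Hw; auto.
      unfold eval_word in *; simpl. rewrite E. reflexivity. simpl; lia.
Qed.

Lemma gprod_map_conj (L : list G) : gprod G (map (fun z => D * z * D^-1) L) = D * gprod G L * D^-1.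
Proof. induction L; simpl. geq. rewrite IHL. geq. Qed.

Lemma Wlem n : forall L, length L = n -> (forall z, In z L -> Div G M D z) -> forall k, exists pw, (forall e, In e pw -> Div G M D (snd e)) /\ eval_word G pw = gprod G L * gpow G (D^-1) k /\ (length pw <= Nat.max n k)%nat.
Proof.
  induction n as [|n IH]; intros L Ln HL k.
  - destruct L; simpl in Ln; try discriminate.
    exists (repeat (false, D) k). split. intros e He. apply repeat_spec in He. subst e. simpl. apply bal_self; auto.
    split. simpl. rewrite gmul1x. induction k; simpl. reflexivity. unfold eval_word in *; simpl. rewrite IHk. reflexivity.
    rewrite repeat_length. lia.
  - destruct L as [|s L]; simpl in Ln; try discriminate. injection Ln as Ln.
    assert (Hs : Div G M D s) by (apply HL; left; auto).
    destruct k as [|k].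
    + destruct (IH L Ln (fun z Hz => HL z (or_intror Hz)) 0%nat) as [pw [H1 [H2 H3]]].
      exists ((true, s) :: pw). split. intros e [<-|He]; auto. split.
      unfold eval_word in *; simpl in *. rewrite H2. geq. simpl in *; lia.
    + assert (HL' : forall z, In z (map (fun z => D * z * D^-1) L) -> Div G M D z).
      { intros z Hz. apply in_map_iff in Hz. destruct Hz as [z' [<- Hz']]. apply bal_conj1; auto. apply HL; right; auto. }
      destruct (IH _ (eq_trans (length_map _ _) Ln) HL' k) as [pw [H1 [H2 H3]]].
      exists ((false, D * s^-1) :: pw). split. intros e [<-|He]; auto. simpl. apply bal_compl_r; auto.
      split. unfold eval_word in *; simpl in *. rewrite H2, gprod_map_conj. unfold letter; simpl. geq. simpl in *; lia.
Qed.

Lemma min_nat (P : nat -> Prop) : (exists n, P n) -> exists n, P n /\ forall m, P m -> (n <= m)%nat.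
Proof.
  intros [n Hn]. revert Hn. induction n as [n IH] using (well_founded_induction Wf_nat.lt_wf). intro Hn.
  destruct (classic (exists m, P m /\ (m < n)%nat)) as [[m [Hm Lm]]|Nx].
  - apply (IH m Lm Hm).
  - exists n. split; auto. intros m Hm. destruct (Nat.lt_ge_cases m n); auto. exfalso; apply Nx; eauto.
Qed.

Lemma main_sec theta : HN_reduced G M D d theta -> exists n, wordlen G M D theta n /\ coset_len G M D H theta n.
Proof.
  intros [a [p [[[Ma Hun] Eth] [Hred Hp]]]].
  rewrite zpow_zp in Eth.
  assert (Hp0 : (p <= 0)%Z) by lia.
  set (k := Z.to_nat (- p)).
  assert (Ezp : zp p = gpow G (D^-1) k).
  { rewrite gpow_inv, <- zp_negnat. f_equal. unfold k. lia. }
  assert (WL : forall L, (forall z, In z L -> Div G M D z) -> gprod G L = a -> exists w, represents G M D w theta /\ (length w <= Nat.max (length L) k)%nat).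
  { intros L HL EL. destruct (Wlem (length L) L eq_refl HL k) as [pw [H1 [H2 H3]]].
    destruct (prew pw H1) as [w [Hw Lw]]. exists w. split.
    rewrite H2, EL, <- Ezp, <- Eth in Hw. auto. lia. }
  assert (WB : forall t, le a (gpow G D t) -> exists w, represents G M D w theta /\ (length w <= Nat.max t k)%nat).
  { intros t Ht. destruct (NF t a Ma Ht) as [L [HL [LL EL]]]. destruct (WL L HL EL) as [w [Hw Lw]].
    exists w. split; auto. lia. }
  destruct (min_nat (fun n => exists w, represents G M D w theta /\ length w = n)) as [n0 [[w0 [Hw0 Lw0]] Hmin]].
  { destruct (proj1 (HgenM a) Ma) as [L [HL EL]]. destruct (WL L HL EL) as [w [Hw _]]. eauto. }
  assert (WLn : wordlen G M D theta n0).
  { split. eauto. intros w Hw. apply Hmin. eauto. }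
  exists n0. split; auto. split.
  - exists theta. split; auto. exists one. split. apply H_one. geq.
  - intros b m [h [Hh ->]] [[w [Hw Lw]] _].
    destruct (lip w _ Hw) as [i [s [A1 [A2 A3]]]].
    rewrite Eth in A1, A2.
    assert (B1 : le (zp (i - p)) (h * a)).
    { apply (le_mulr (- p)) in A1. rewrite <- zp_add in A1. rewrite zp_opp in A1.
      replace (h * (a * zp p) * (zp p)^-1) with (h * a) in A1 by geq. auto. }
    assert (B2 : le (h * a) (zp (s - p))).
    { apply (le_mulr (- p)) in A2. rewrite <- zp_add in A2. rewrite zp_opp in A2.
      replace (h * (a * zp p) * (zp p)^-1) with (h * a) in A2 by geq. auto. }
    set (t := Z.to_nat (Z.max (s - p) 0)).
    assert (B3 : le (h * a) (gpow G D t)).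
    { rewrite <- zp_nat. eapply le_trans. apply B2. apply zp_mono. unfold t. lia. }
    apply I1 in B3; auto.
    destruct (WB t B3) as [w' [Hw' Lw']].
    assert (n0 <= length w')%nat by (apply Hmin; eauto).
    destruct Hp as [Hp|[Hp Hom]].
    + subst p. unfold k, t in *. lia.
    + assert (Hi : (i - p <= 0)%Z).
      { destruct (Z_le_gt_dec (i - p) 0); auto. exfalso. apply Hom. apply IIlem with h; auto.
        rewrite <- zp_1. eapply le_trans; [|apply B1]. apply zp_mono. lia. }
      unfold k, t in *. lia.
Qed.

End Main.

Theorem theorem3p4 (G : Grp) (M : G -> Prop) (D d : G) :
  garside G M D ->
  parabolic G M D d ->
  (exists h : G, parH G M d h /\ h <> gone) ->
  forall theta : G, HN_reduced G M D d theta ->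
  exists n : nat, wordlen G M D theta n /\ coset_len G M D (parH G M d) theta n.
Proof.
  intros [[HM1 HMmul] [Hpt [HbalD [_ [_ [HgenM [_ Hlat]]]]]]] [Hbald Hpar] _ theta Hth.
  eapply main_sec; eauto.
Qed.
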